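(* BC, MS and FT satisfy partition consistency. VD and MF do not: for each $f\in\{\mathrm{VD},\mathrm{MF}\}$ there exists a profile $P$ for which the equivalence in the definition of partition consistency fails.
   Context: Candidates come from a fixed infinite universe; rules are defined for profiles over every finite candidate set $C$. An approval ballot is a nonempty subset $A\subseteq C$; a profile over $C$ is a finite sequence of ballots. An axis is a strict linear order $\triangleleft$ on $C$; $a\trianglelefteq b$ means $a\triangleleft b$ or $a=b$. A ballot $A$ is an interval of $\triangleleft$ if for all $a,b\in A$ and every $c$ with $a\triangleleft c\triangleleft b$ we have $c\in A$; a set $S\subseteq C$ is an interval of $\triangleleft$ in the same sense. For $C'\subseteq C$, $P_{C'}$ is the profile over $C'$ obtained by intersecting each ballot with $C'$ (ballots becoming empty are discarded), and $\triangleleft_{C'}$ is the restriction of $\triangleleft$ to $C'$. The co-approval partition $C_1,\dots,C_k$ of $P$ is the set of equivalence classes of the equivalence relation on $C$ generated by $x\sim y$ whenever some ballot of $P$ contains both $x$ and $y$ (never-approved candidates form singleton classes). A rule $f$ satisfies partition consistency if for every profile $P$ with co-approval partition $C_1,\dots,C_k$ and every axis $\triangleleft$ on $C$: $\triangleleft\in f(P)$ iff for every $j$, $C_j$ is an interval of $\triangleleft$ and $\triangleleft_{C_j}\in f(P_{C_j})$. For a cost function $\mathrm{cost}_f$, the scoring rule returns $f(P)=\arg\min_{\triangleleft}\sum_{A\in P}\mathrm{cost}_f(A,\triangleleft)$. The five rules are the scoring rules (on every $C$) with costs: $\mathrm{cost}_{\mathrm{VD}}(A,\triangleleft)=0$ if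 $A$ is an interval of $\triangleleft$ and $1$ otherwise; $\mathrm{cost}_{\mathrm{MF}}(A,\triangleleft)=\min_{x,y\in A,\ x\trianglelefteq y}\big(|\{z\in A: z\triangleleft x \text{ or } y\triangleleft z\}|+|\{z\notin A: x\triangleleft z\triangleleft y\}|\big)$; $\mathrm{cost}_{\mathrm{BC}}(A,\triangleleft)=|\{b\notin A: a\triangleleft b\triangleleft c \text{ for some } a,c\in A\}|$; $\mathrm{cost}_{\mathrm{MS}}(A,\triangleleft)=\sum_{x\in C\setminus A}\min\big(|\{y\in A:y\triangleleft x\}|,\,|\{y\in A:x\triangleleft y\}|\big)$; $\mathrm{cost}_{\mathrm{FT}}(A,\triangleleft)=\sum_{x\in C\setminus A}|\{y\in A:y\triangleleft x\}|\cdot|\{y\in A:x\triangleleft y\}|$. *)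

(* Defs.v *)
From mathcomp Require Import all_boot.
Set Implicit Arguments. Unset Strict Implicit. Unset Printing Implicit Defensive.

(* Candidates are natural numbers (a fixed infinite universe).
   A finite candidate set is a duplicate-free list C : seq nat (only its
   elements matter).  A ballot is a list of candidates (read as the set of its
   members).  An axis on C is a list ax that is a permutation of C, read from
   left to right: a <| b iff a occurs before b in ax. *)

Definition ballot := seq nat.
Definition profile := seq ballot.

Definition is_ballot (C : seq nat) (A : ballot) : Prop :=
  A != [::] /\ {subset A <= C}.

Definition is_profile (C : seq nat) (P : profile) : Prop :=
  forall A, A \in P -> is_ballot C A.

Definition is_axis (C ax : seq nat) : Prop := perm_eq ax C.

Definition axlt (ax : seq nat) (a b : nat) : bool := index a ax < index b ax.
Definition axle (ax : seq nat) (a b : nat) : bool := index a ax <= index b ax.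

Definition is_interval (ax : seq nat) (S : seq nat) : bool :=
  all (fun a => all (fun b =>
    all (fun c => (axlt ax a c && axlt ax c b) ==> (c \in S)) ax) S) S.

(* cost functions; ax enumerates the whole candidate set C *)
Definition cost_VD (A : ballot) (ax : seq nat) : nat :=
  if is_interval ax A then 0 else 1.

Definition mf_val (A : ballot) (ax : seq nat) (x y : nat) : nat :=
  count (fun z => (z \in A) && (axlt ax z x || axlt ax y z)) ax
  + count (fun z => (z \notin A) && axlt ax x z && axlt ax z y) ax.

(* minimum over pairs x <|= y in A (nonempty since A is nonempty).  The
   default value size ax is an upper bound of every mf_val, so it never
   affects the minimum when A is nonempty. *)
Definition cost_MF (A : ballot) (ax : seq nat) : nat :=
  foldr minn (size ax)
    [seq mf_val A ax x y | x <- A, y <- [seq y <- A | axle ax x y]].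

Definition cost_BC (A : ballot) (ax : seq nat) : nat :=
  count (fun b => (b \notin A) && has (fun a => axlt ax a b) A
                               && has (fun c => axlt ax b c) A) ax.

Definition n_left (A : ballot) (ax : seq nat) (x : nat) : nat :=
  count (fun y => (y \in A) && axlt ax y x) ax.
Definition n_right (A : ballot) (ax : seq nat) (x : nat) : nat :=
  count (fun y => (y \in A) && axlt ax x y) ax.

Definition cost_MS (A : ballot) (ax : seq nat) : nat :=
  \sum_(x <- ax | x \notin A) minn (n_left A ax x) (n_right A ax x).

Definition cost_FT (A : ballot) (ax : seq nat) : nat :=
  \sum_(x <- ax | x \notin A) n_left A ax x * n_right A ax x.

(* a rule: given candidate set C and profile P, the predicate "ax is among the
   selected axes" *)
Definition rule := seq nat -> profile -> seq nat -> Prop.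

Definition total_cost (cost : ballot -> seq nat -> nat) (P : profile) (ax : seq nat) : nat :=
  \sum_(A <- P) cost A ax.

Definition scoring_rule (cost : ballot -> seq nat -> nat) : rule :=
  fun C P ax => is_axis C ax /\
    forall ax', is_axis C ax' -> total_cost cost P ax <= total_cost cost P ax'.

Definition VD : rule := scoring_rule cost_VD.
Definition MF : rule := scoring_rule cost_MF.
Definition BC : rule := scoring_rule cost_BC.
Definition MS : rule := scoring_rule cost_MS.
Definition FT : rule := scoring_rule cost_FT.

(* co-approval equivalence: the equivalence relation generated by
   "x and y are approved together by some ballot of P" *)
Definition coapproved (P : profile) (x y : nat) : bool :=
  has (fun A => (x \in A) && (y \in A)) P.

Inductive coapp_equiv (P : profile) : nat -> nat -> Prop :=
| ce_refl x : coapp_equiv P x x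
| ce_step x y z : coapp_equiv P x y -> coapproved P y z -> coapp_equiv P x z.

Definition is_block (C : seq nat) (P : profile) (S : seq nat) : Prop :=
  uniq S /\ exists2 x, x \in C &
    forall y, y \in S <-> (y \in C /\ coapp_equiv P x y).

Definition restrict (P : profile) (S : seq nat) : profile :=
  [seq [seq x <- A | x \in S] | A <- P & has (fun x => x \in S) A].

Definition pc_equiv (f : rule) (C : seq nat) (P : profile) (ax : seq nat) : Prop :=
  f C P ax <->
  (forall S, is_block C P S ->
     is_interval ax S /\ f S (restrict P S) [seq x <- ax | x \in S]).

Definition partition_consistent (f : rule) : Prop :=
  forall (C : seq nat) (P : profile) (ax : seq nat),
    uniq C -> is_profile C P -> is_axis C ax -> pc_equiv f C P ax.

(* Main.v *)
Require Import Defs.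
From mathcomp Require Import all_boot zify.
From Stdlib Require Import ClassicalEpsilon.
Set Implicit Arguments. Unset Strict Implicit. Unset Printing Implicit Defensive.

Lemma idx_filter (p : pred nat) (s : seq nat) a b : p a -> p b ->
  (index a [seq x <- s | p x] < index b [seq x <- s | p x]) = (index a s < index b s).
Proof.
move=> pa pb; elim: s => [|h t IH] //=.
case ph: (p h) => /=.
  by case: (h == a); case: (h == b) => //=; rewrite ltnS.
have ha : h != a by apply/eqP => E; rewrite -E ph in pa.
have hb : h != b by apply/eqP => E; rewrite -E ph in pb.
by rewrite (negPf ha) (negPf hb) ltnS.
Qed.

Lemma axlt_filter (p : pred nat) s a b : p a -> p b ->
  axlt [seq x <- s | p x] a b = axlt s a b.
Proof. exact: idx_filter. Qed.

Lemma axlt_mem s a b : axlt s a b -> a \in s.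
Proof. rewrite /axlt => H; rewrite -index_mem; apply: leq_trans H _; exact: index_size. Qed.

Lemma count_split (T : Type) (q p : pred T) s :
  count q s = count (fun x => q x && p x) s + count (fun x => q x && ~~ p x) s.
Proof. elim: s => //= h t ->; case: (q h); case: (p h) => //=; rewrite ?addnS ?addnA //. Qed.

Lemma term_le_sum (T : eqType) (r : seq T) (P : pred T) (F : T -> nat) c :
  c \in r -> P c -> F c <= \sum_(i <- r | P i) F i.
Proof.
elim: r => //= h t IH; rewrite inE big_cons => /orP[/eqP->|ct] Pc.
  by rewrite Pc leq_addr.
case: (P h); last exact: IH.
by apply: leq_trans (IH ct Pc) _; rewrite leq_addl.
Qed.

Definition ob (A S ax : seq nat) c :=
  (c \notin S) && has (fun a => axlt ax a c) A && has (fun b => axlt ax c b) A.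
Definition outside A S ax := has (ob A S ax) ax.

Definition cost_prop (cost : ballot -> seq nat -> nat) :=
  forall A S ax, {subset A <= S} -> {subset A <= ax} ->
    cost A [seq x <- ax | x \in S] + outside A S ax <= cost A ax /\
    (~~ outside A S ax -> cost A ax = cost A [seq x <- ax | x \in S]).

Lemma BC_prop : cost_prop cost_BC.
Proof.
move=> A S ax sub subax.
have E1 : cost_BC A [seq x <- ax | x \in S] =
   count (fun b => ((b \notin A) && has (fun a => axlt ax a b) A
                               && has (fun c => axlt ax b c) A) && (b \in S)) ax.
  rewrite /cost_BC count_filter; apply: eq_count => b /=.
  case bS: (b \in S); rewrite ?andbF ?andbT //.
  congr (_ && _ && _); apply: eq_in_has => y yA /=; rewrite axlt_filter //; exact: sub.
have E2 : outside A S ax =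
   (0 < count (fun b => ((b \notin A) && has (fun a => axlt ax a b) A
                               && has (fun c => axlt ax b c) A) && ~~ (b \in S)) ax).
  rewrite /outside has_count; congr (0 < _); apply: eq_count => b /=.
  rewrite /ob; case bS: (b \in S); rewrite ?andbF ?andbT //=.
  case bA: (b \in A) => //=; by rewrite (sub _ bA) in bS.
have E3 : cost_BC A ax =
   count (fun b => ((b \notin A) && has (fun a => axlt ax a b) A
                               && has (fun c => axlt ax b c) A) && (b \in S)) ax +
   count (fun b => ((b \notin A) && has (fun a => axlt ax a b) A
                               && has (fun c => axlt ax b c) A) && ~~ (b \in S)) ax.
  exact: count_split.
rewrite E3 E1 E2; split.
  by rewrite leq_add2l; case: count.
by case: count => //= n; rewrite addn0.
Qed.

Section GSum.
Variable g : nat -> nat -> nat.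
Hypothesis g0l : forall n, g 0 n = 0.
Hypothesis g0r : forall n, g n 0 = 0.
Hypothesis gpos : forall m n, 0 < g m.+1 n.+1.

Definition gcost (A : ballot) (ax : seq nat) : nat :=
  \sum_(x <- ax | x \notin A) g (n_left A ax x) (n_right A ax x).

Lemma gcost_prop : cost_prop gcost.
Proof.
move=> A S ax sub subax.
have nlE x : x \in S -> n_left A [seq y <- ax | y \in S] x = n_left A ax x.
  move=> xS; rewrite /n_left count_filter; apply: eq_count => y /=.
  case yA: (y \in A) => //=; have yS := sub _ yA.
  by rewrite yS andbT axlt_filter.
have nrE x : x \in S -> n_right A [seq y <- ax | y \in S] x = n_right A ax x.
  move=> xS; rewrite /n_right count_filter; apply: eq_count => y /=.
  case yA: (y \in A) => //=; have yS := sub _ yA.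
  by rewrite yS andbT axlt_filter.
have E1 : gcost A [seq x <- ax | x \in S] =
  \sum_(x <- ax | (x \notin A) && (x \in S)) g (n_left A ax x) (n_right A ax x).
  rewrite /gcost big_filter_cond.
  apply: eq_big => x; first by rewrite andbC.
  by case/andP=> xS _; rewrite nlE // nrE.
have E3 : gcost A ax = \sum_(x <- ax | (x \notin A) && (x \in S)) g (n_left A ax x) (n_right A ax x)
   + \sum_(x <- ax | (x \notin A) && ~~ (x \in S)) g (n_left A ax x) (n_right A ax x).
  by rewrite /gcost (bigID (fun x => x \in S)).
rewrite E1 E3.
have E2 : \sum_(i <- ax | (i \notin A) && (i \notin S)) g (n_left A ax i) (n_right A ax i)
        = \sum_(i <- ax | ob A S ax i) g (n_left A ax i) (n_right A ax i)
          + \sum_(i <- ax | (i \notin S) && ~~ ob A S ax i) g (n_left A ax i) (n_right A ax i).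
  rewrite (bigID (ob A S ax)) /=; congr (_ + _); apply: eq_bigl => i.
    rewrite /ob; case iS: (i \in S) => //=; rewrite ?andbF //.
    by case iA: (i \in A) => //=; rewrite (sub _ iA) in iS.
  case iS: (i \in S); rewrite /ob iS ?andbF //=.
  by case iA: (i \in A) => //=; rewrite (sub _ iA) in iS.
have Z : \sum_(i <- ax | (i \notin S) && ~~ ob A S ax i) g (n_left A ax i) (n_right A ax i) = 0.
  rewrite big1 // => i /andP[iS]; rewrite /ob iS /= negb_and => /orP[] Hn.
    suff -> : n_left A ax i = 0 by rewrite g0l.
    apply/eqP; rewrite -leqn0 leqNgt -has_count; apply: contra Hn => /hasP[y _ /andP[yA Hy]].
    by apply/hasP; exists y.
  suff -> : n_right A ax i = 0 by rewrite g0r.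
  apply/eqP; rewrite -leqn0 leqNgt -has_count; apply: contra Hn => /hasP[y _ /andP[yA Hy]].
  by apply/hasP; exists y.
rewrite E2 Z addn0; split; last first.
  move=> H; suff -> : (\sum_(i <- ax | ob A S ax i) g (n_left A ax i) (n_right A ax i)) = 0 by rewrite addn0.
  rewrite big_seq_cond big1 // => i /andP[iax Hi].
  by case/negP: H; apply/hasP; exists i.
rewrite leq_add2l /outside; case: hasP => // -[c cax Hc].
apply: leq_trans (term_le_sum _ cax Hc).
move: Hc; rewrite /ob => /andP[/andP[_ /hasP[a aA Ha]] /hasP[b bA Hb]].
rewrite /n_left /n_right.
case E4: count => [|m].
  move/eqP: E4; apply/contraLR => _; rewrite -lt0n -has_count; apply/hasP.
  by exists a; [exact: axlt_mem Ha | rewrite aA].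
case E5: count => [|k]; last exact: gpos.
move/eqP: E5; apply/contraLR => _; rewrite -lt0n -has_count; apply/hasP.
exists b; last by rewrite bA.
exact: subax.
Qed.
End GSum.

Lemma MS_prop : cost_prop cost_MS.
Proof.
have -> : cost_MS = gcost minn by [].
apply: gcost_prop => [n|n|m n]; by rewrite ?min0n ?minn0 ?leq_min.
Qed.
Lemma FT_prop : cost_prop cost_FT.
Proof.
have -> : cost_FT = gcost muln by [].
apply: gcost_prop => [n|n|m n]; by rewrite ?mul0n ?muln0 ?muln_gt0.
Qed.

Lemma strict_sum (T : eqType) (r : seq T) (F G : T -> nat) (i0 : T) :
  (forall i, i \in r -> F i <= G i) -> i0 \in r -> F i0 < G i0 ->
  \sum_(i <- r) F i < \sum_(i <- r) G i.
Proof.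
elim: r => //= h t IH H; rewrite inE !big_cons => /orP[/eqP->|it] Hlt.
  have : \sum_(i <- t) F i <= \sum_(i <- t) G i.
    rewrite big_seq [X in _ <= X]big_seq; apply: leq_sum => i it; apply: H; by rewrite inE it orbT.
  lia.
have H' : forall i, i \in t -> F i <= G i by move=> i it'; apply: H; rewrite inE it' orbT.
have := IH H' it Hlt; have := H h (mem_head _ _); lia.
Qed.

Lemma filter_nil (p : pred nat) s : (forall y, y \in s -> ~~ p y) -> [seq y <- s | p y] = [::].
Proof.
elim: s => //= h t IH H; rewrite (negbTE (H h (mem_head _ _))) IH // => y yt.
by apply: H; rewrite inE yt orbT.
Qed.

Lemma is_intervalP ax S :
  reflect (forall a b c, a \in S -> b \in S -> c \in ax -> axlt ax a c -> axlt ax c b -> c \in S)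
          (is_interval ax S).
Proof.
apply: (iffP idP).
  move=> H a b c aS bS cax H1 H2.
  move/allP: H => /(_ a aS) /allP /(_ b bS) /allP /(_ c cax) /implyP; apply; by rewrite H1 H2.
move=> H; apply/allP => a aS; apply/allP => b bS; apply/allP => c cax; apply/implyP => /andP[H1 H2].
exact: H H1 H2.
Qed.

Lemma not_intervalE ax S : ~~ is_interval ax S ->
  exists a b c, [/\ a \in S, b \in S, c \in ax, c \notin S & axlt ax a c && axlt ax c b].
Proof.
case/allPn => a aS /allPn [b bS] /allPn [c cax]; rewrite negb_imply => /andP[H1 H2].
by exists a, b, c.
Qed.



Lemma restrict_eqi (P : profile) S1 S2 : S1 =i S2 -> restrict P S1 = restrict P S2.
Proof.
move=> H; rewrite /restrict.
have -> : [seq A <- P | has (fun x => x \in S1) A] = [seq A <- P | has (fun x => x \in S2) A].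
  by apply: eq_filter => A; apply: eq_has => y; rewrite H.
by apply: eq_map => A; apply: eq_filter => y; rewrite H.
Qed.

Lemma interval_eqi ax S1 S2 : S1 =i S2 -> is_interval ax S1 = is_interval ax S2.
Proof.
move=> H; apply/is_intervalP/is_intervalP => K a b c aS bS cax H1 H2.
  by rewrite -H; apply: (K a b c) => //; rewrite H.
by rewrite H; apply: (K a b c) => //; rewrite -H.
Qed.

Lemma scoring_eqi cost S1 S2 Q sg : uniq S1 -> uniq S2 -> S1 =i S2 ->
  scoring_rule cost S1 Q sg <-> scoring_rule cost S2 Q sg.
Proof.
move=> u1 u2 H; have p12 : perm_eq S1 S2 by apply: uniq_perm.
have E t : is_axis S1 t <-> is_axis S2 t.
  rewrite /is_axis; split => K; [exact: perm_trans K p12|].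
  by apply: perm_trans K _; rewrite perm_sym.
split=> -[K1 K2]; split; [by apply/E|move=> t /E; exact: K2|by apply/E|move=> t /E; exact: K2].
Qed.

Section Main.
Variable cost : ballot -> seq nat -> nat.
Hypothesis Hc : cost_prop cost.
Variables (C : seq nat) (P : profile).
Hypothesis uC : uniq C.
Hypothesis HP : is_profile C P.

Local Notation E := (coapp_equiv P).

Lemma E_trans x y z : E x y -> E y z -> E x z.
Proof. move=> Hxy Hyz; elim: Hyz Hxy => // a b c _ IH Hbc Hxa; exact: ce_step (IH Hxa) Hbc. Qed.

Lemma coapp_sym x y : coapproved P x y = coapproved P y x.
Proof. by apply: eq_has => A; rewrite andbC. Qed.

Lemma E_sym x y : E x y -> E y x.
Proof.
elim=> [a|a b c Hab IH Hbc]; first exact: ce_refl.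
apply: (E_trans _ IH); apply: (ce_step (ce_refl P c)); by rewrite coapp_sym.
Qed.

Definition Ed x y : bool := if excluded_middle_informative (E x y) then true else false.
Lemma EdP x y : reflect (E x y) (Ed x y).
Proof. rewrite /Ed; case: excluded_middle_informative => H; by constructor. Qed.

Lemma Ed_eq x y : E x y -> Ed x =1 Ed y.
Proof.
move=> Hxy z; apply/EdP/EdP => H; first exact: E_trans (E_sym Hxy) H.
exact: E_trans Hxy H.
Qed.

Definition blk x := [seq y <- C | Ed x y].
Lemma mem_blk x y : (y \in blk x) = (y \in C) && Ed x y.
Proof. by rewrite mem_filter andbC. Qed.
Lemma blk_eq x y : E x y -> blk x = blk y.
Proof. by move=> H; rewrite /blk (eq_filter (Ed_eq H)). Qed.
Lemma blk_sub x : {subset blk x <= C}.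
Proof. by move=> y; rewrite mem_blk => /andP[]. Qed.
Lemma blkE x y : y \in blk x -> E x y.
Proof. by rewrite mem_blk => /andP[_ /EdP]. Qed.
Lemma blkI x y : y \in C -> E x y -> y \in blk x.
Proof. by move=> yC /EdP H; rewrite mem_blk yC H. Qed.

Definition key x := find (Ed x) C.
Lemma key_lt x : x \in C -> key x < size C.
Proof. move=> xC; rewrite /key -has_find; apply/hasP; exists x => //; apply/EdP; exact: ce_refl. Qed.
Lemma key_nth x : x \in C -> E x (nth 0 C (key x)).
Proof. move=> xC; apply/EdP; apply: nth_find; rewrite has_find; exact: key_lt. Qed.
Lemma key_eq x y : E x y -> key x = key y.
Proof. by move=> H; rewrite /key (eq_find (Ed_eq H)). Qed.
Lemma key_inj x y : x \in C -> y \in C -> key x = key y -> E x y.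
Proof.
move=> xC yC H; apply: E_trans (key_nth xC) _; rewrite H; exact: E_sym (key_nth yC).
Qed.

Lemma ballot_sub A : A \in P -> {subset A <= C}.
Proof. by case/HP. Qed.
Definition hd (A : ballot) := head 0 A.
Lemma hd_in A : A \in P -> hd A \in A.
Proof. by case/HP; case: A => //= a A _ _; rewrite mem_head. Qed.
Lemma ballotE A a b : A \in P -> a \in A -> b \in A -> E a b.
Proof. move=> AP aA bA; apply: ce_step (ce_refl P a) _; apply/hasP; exists A => //; by rewrite aA bA. Qed.
Definition bA A := blk (hd A).
Lemma sub_bA A : A \in P -> {subset A <= bA A}.
Proof. move=> AP a aA; apply: blkI; [exact: ballot_sub aA | exact: ballotE (hd_in AP) aA]. Qed.

Definition R := [seq x <- C | nth 0 C (key x) == x].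
Definition rep A := nth 0 C (key (hd A)).
Lemma uR : uniq R. Proof. exact: filter_uniq. Qed.
Lemma R_sub x : x \in R -> x \in C.
Proof. by rewrite mem_filter => /andP[]. Qed.
Lemma rep_C x : x \in C -> nth 0 C (key x) \in C.
Proof. by move=> xC; apply: mem_nth; exact: key_lt. Qed.
Lemma rep_R x : x \in C -> nth 0 C (key x) \in R.
Proof.
move=> xC; rewrite mem_filter rep_C // andbT.
by rewrite -(key_eq (key_nth xC)).
Qed.
Lemma R_eq x y : x \in R -> y \in R -> E x y -> x = y.
Proof.
rewrite !mem_filter => /andP[/eqP hx _] /andP[/eqP hy _] H.
by rewrite -hx -hy (key_eq H).
Qed.
Lemma has_blk x A : x \in R -> A \in P -> has (fun y => y \in blk x) A = (x == rep A).
Proof.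
move=> xR AP; have hC : hd A \in C := ballot_sub AP (hd_in AP).
apply/hasP/eqP.
  case=> a aA /blkE Hxa; apply: R_eq xR (rep_R hC) _.
  apply: E_trans Hxa _; apply: E_trans (ballotE AP aA (hd_in AP)) _; exact: key_nth.
move=> ->; exists (hd A); first exact: hd_in.
exact: (blkI hC (E_sym (key_nth hC))).
Qed.

Definition TB ax := \sum_(x <- R) total_cost cost (restrict P (blk x)) [seq y <- ax | y \in blk x].

Lemma restrict_total S sg : total_cost cost (restrict P S) sg =
  \sum_(A <- P | has (fun x => x \in S) A) cost [seq x <- A | x \in S] sg.
Proof. by rewrite /total_cost /restrict big_map big_filter. Qed.

Lemma group ax : \sum_(A <- P) cost A [seq y <- ax | y \in bA A] = TB ax.
Proof.
symmetry; rewrite /TB.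
rewrite (eq_big_seq (fun x => \sum_(A <- P) if x == rep A then cost A [seq y <- ax | y \in bA A] else 0)); last first.
  move=> x xR; rewrite restrict_total big_mkcond; apply: eq_big_seq => A AP.
  rewrite (has_blk xR AP); case: (eqVneq x (rep A)) => [Ex|//].
  have hC : hd A \in C := ballot_sub AP (hd_in AP).
  have Eb : blk x = bA A by rewrite Ex; apply: blk_eq; exact: E_sym (key_nth hC).
  rewrite Eb; congr (cost _ _); apply/all_filterP/allP; exact: sub_bA.
rewrite exchange_big /=; apply: eq_big_seq => A AP.
rewrite -big_mkcond big_const_seq.
have -> : count (fun x => x == rep A) R = 1.
  have hR : rep A \in R := rep_R (ballot_sub AP (hd_in AP)).
  have := count_uniq_mem (rep A) uR; rewrite hR => H.
  by rewrite -[RHS]/(nat_of_bool true) -H; apply: eq_count => y.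
by rewrite /= addn0.
Qed.

Section Ax.
Variable ax : seq nat.
Hypothesis Hax : is_axis C ax.
Lemma uax : uniq ax. Proof. by rewrite (perm_uniq Hax). Qed.
Lemma memax y : (y \in ax) = (y \in C). Proof. exact: perm_mem. Qed.

Lemma L1 : TB ax + \sum_(A <- P) outside A (bA A) ax <= total_cost cost P ax.
Proof.
rewrite -group -big_split /total_cost big_seq [X in _ <= X]big_seq; apply: leq_sum => A AP.
have sax : {subset A <= ax} by move=> a aA; rewrite memax; exact: ballot_sub aA.
by have [H1 _] := Hc (sub_bA AP) sax.
Qed.

Lemma L2 : (forall x, x \in C -> is_interval ax (blk x)) -> total_cost cost P ax = TB ax.
Proof.
move=> H; rewrite -group /total_cost big_seq [RHS]big_seq; apply: eq_bigr => A AP.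
have sax : {subset A <= ax} by move=> a aA; rewrite memax; exact: ballot_sub aA.
have [_ H2] := Hc (sub_bA AP) sax; apply: H2.
apply/hasP => -[c cax /andP[/andP[cS /hasP[a aA Ha]] /hasP[b bA' Hb]]].
have hC : hd A \in C := ballot_sub AP (hd_in AP).
move/is_intervalP: (H _ hC) => /(_ a b c (sub_bA AP aA) (sub_bA AP bA') cax Ha Hb).
by rewrite (negbTE cS).
Qed.

Lemma L3 x : x \in C -> ~~ is_interval ax (blk x) -> 0 < \sum_(A <- P) outside A (bA A) ax.
Proof.
move=> xC /not_intervalE [a [b [c [aS bS cax cS /andP[Hac Hcb]]]]].
have Eab : E a b := E_trans (E_sym (blkE aS)) (blkE bS).
suff : axlt ax b c \/ exists2 A, A \in P & outside A (bA A) ax.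
  case=> [Hbc|[A AP HA]]; first by move: Hbc Hcb; rewrite /axlt; lia.
  by apply: leq_trans (term_le_sum _ AP (erefl true)); rewrite HA.
elim: Eab Hac bS => [z Hzc _|y z w Hyz IH Hzw Hyc wS]; first by left.
case/hasP: Hzw => A AP /andP[zA wA].
have zS : z \in blk x.
  apply: blkI; first exact: ballot_sub zA.
  exact: E_trans (blkE wS) (E_sym (ballotE AP zA wA)).
case: (IH Hyc zS) => [Hzc|]; last by right.
have wC := ballot_sub AP wA.
have wc : w != c by apply: contraNneq cS => <-.
have : index w ax != index c ax.
  have wax : w \in ax by rewrite memax.
  apply: contra wc => /eqP Hi; apply/eqP; by rewrite -(nth_index 0 wax) -(nth_index 0 cax) Hi.
rewrite neq_ltn => /orP[Hwc|Hcw]; first by left.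
right; exists A => //; apply/hasP; exists c => //.
have hC : hd A \in C := ballot_sub AP (hd_in AP).
have Eb : bA A = blk x.
  apply: blk_eq; apply: E_trans (ballotE AP (hd_in AP) zA) _; exact: E_sym (blkE zS).
rewrite /ob Eb cS /=; apply/andP; split; apply/hasP; [exists z|exists w] => //.
Qed.
End Ax.

Definition lek := fun a b => key a <= key b.
Lemma lek_total : total lek. Proof. by move=> a b; rewrite /lek leq_total. Qed.
Lemma lek_trans : transitive lek. Proof. by move=> a b c; rewrite /lek; apply: leq_trans. Qed.

Lemma sorted_const s k : (forall y, y \in s -> key y = k) -> sorted lek s.
Proof.
elim: s => //= h t IH H; rewrite path_sortedE; last exact: lek_trans.
rewrite IH; last by move=> y yt; apply: H; rewrite inE yt orbT.
rewrite andbT; apply/allP => y yt; by rewrite /lek H ?mem_head // H // ?inE ?yt ?orbT.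
Qed.

Section Sort.
Variable L : seq nat.
Hypothesis HL : is_axis C L.
Definition sax := sort lek L.
Lemma sax_axis : is_axis C sax.
Proof. by rewrite /is_axis /sax perm_sort. Qed.
Lemma sax_filter x : x \in C -> [seq y <- sax | y \in blk x] = [seq y <- L | y \in blk x].
Proof.
move=> xC; rewrite /sax filter_sort; [|exact: lek_total|exact: lek_trans].
apply: sorted_sort; first exact: lek_trans.
apply: (sorted_const (k := key x)) => y; rewrite mem_filter => /andP[/blkE H _].
by rewrite (key_eq H).
Qed.
Lemma sax_int x : x \in C -> is_interval sax (blk x).
Proof.
move=> xC; apply/is_intervalP => a b c aS bS cax Hac Hcb.
have ss : sorted lek sax by apply: sort_sorted; exact: lek_total.
have memC y : (y \in sax) = (y \in C) by apply: perm_mem; exact: sax_axis.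
have aax : a \in sax by rewrite memC; exact: blk_sub aS.
have bax : b \in sax by rewrite memC; exact: blk_sub bS.
have H1 := sorted_leq_nth lek_trans (fun x => leqnn (key x)) 0 ss.
have Kac : key a <= key c.
  have := H1 (index a sax) (index c sax); rewrite !nth_index //; apply;
    rewrite ?inE ?index_mem //; exact: ltnW.
have Kcb : key c <= key b.
  have := H1 (index c sax) (index b sax); rewrite !nth_index //; apply;
    rewrite ?inE ?index_mem //; exact: ltnW.
have ka : key a = key x by rewrite (key_eq (blkE aS)).
have kb : key b = key x by rewrite (key_eq (blkE bS)).
have cC : c \in C by rewrite -memC.
have kc : key x = key c by lia.
exact: (blkI cC (key_inj xC cC kc)).
Qed.
End Sort.

Lemma is_block_blk x : x \in C -> is_block C P (blk x).
Proof.
move=> xC; split; first exact: filter_uniq.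
exists x => // y; rewrite mem_blk; split; first by case/andP => -> /EdP.
by case=> -> /EdP.
Qed.

Lemma block_blk S : is_block C P S -> exists2 x, x \in C & S =i blk x.
Proof.
case=> _ [x xC H]; exists x => // y; rewrite mem_blk.
apply/idP/idP; first by case/H => -> /EdP.
by case/andP => yC /EdP Hy; apply/H.
Qed.

Lemma filter_axis ax' x : is_axis C ax' -> x \in C -> is_axis (blk x) [seq y <- ax' | y \in blk x].
Proof.
move=> H xC; apply: uniq_perm; [apply: filter_uniq; by rewrite (perm_uniq H)|exact: filter_uniq|].
move=> y; rewrite mem_filter (perm_mem H); case yS: (y \in blk x) => //=; exact: blk_sub yS.
Qed.

Theorem pc_main ax : is_axis C ax -> pc_equiv (scoring_rule cost) C P ax.
Proof.
move=> Hax; split.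
  move=> [_ Hopt].
  have allint : forall y, y \in C -> is_interval ax (blk y).
    move=> y yC; apply/negPn/negP => Hn.
    have h1 := L1 Hax; have h3 := L3 Hax yC Hn.
    have e1 : TB (sax ax) = TB ax.
      rewrite /TB; apply: eq_big_seq => r rR; rewrite sax_filter //; exact: R_sub.
    have h2 := L2 (sax_axis Hax) (fun z zC => sax_int Hax zC).
    have := Hopt _ (sax_axis Hax); lia.
  move=> S HS; case: (block_blk HS) => x xC Sx.
  rewrite (interval_eqi _ Sx) (restrict_eqi _ Sx).
  have -> : [seq y <- ax | y \in S] = [seq y <- ax | y \in blk x] by apply: eq_filter => y; rewrite Sx.
  split; first exact: allint.
  apply/(scoring_eqi _ _ _ HS.1 (filter_uniq _ uC) Sx).
  split; first exact: filter_axis.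
  move=> sg Hsg; rewrite leqNgt; apply/negP => Hlt.
  set L := sg ++ [seq y <- ax | y \notin blk x].
  have sgb y : y \in sg -> y \in blk x by rewrite (perm_mem Hsg).
  have HL : is_axis C L.
    apply: uniq_perm => //.
      rewrite cat_uniq (perm_uniq Hsg) filter_uniq ?(uax Hax) ?filter_uniq ?(uax Hax) //= andbT.
      by apply/hasP => -[y]; rewrite mem_filter => /andP[ynb _] /sgb; rewrite (negbTE ynb).
    move=> y; rewrite mem_cat mem_filter (perm_mem Hsg) (memax Hax).
    by case yb: (y \in blk x) => /=; [rewrite (blk_sub yb)|].
  have Fr r : r \in R -> [seq y <- sax L | y \in blk r] = if Ed x r then sg else [seq y <- ax | y \in blk r].
    move=> rR; have rC := R_sub rR; rewrite sax_filter // filter_cat.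
    case: (EdP x r) => Hxr.
      rewrite -(blk_eq Hxr).
      have -> : [seq y <- [seq y <- ax | y \notin blk x] | y \in blk x] = [::].
        by apply: filter_nil => y; rewrite mem_filter => /andP[].
      by rewrite cats0; apply/all_filterP/allP.
    have -> : [seq y <- sg | y \in blk r] = [::].
      apply: filter_nil => y /sgb yx; apply/negP => yr; apply: Hxr.
      exact: E_trans (blkE yx) (E_sym (blkE yr)).
    rewrite /= -filter_predI; apply: eq_filter => y /=.
    case yr: (y \in blk r) => //=; apply/negP => yx; apply: Hxr.
    exact: E_trans (blkE yx) (E_sym (blkE yr)).
  have r0R := rep_R xC.
  have Er0 := key_nth xC.
  have lt : TB (sax L) < TB ax.
    rewrite /TB; apply: (strict_sum (i0 := nth 0 C (key x))) => //.
      move=> r rR; rewrite Fr //; case: (EdP x r) => Hxr //.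
      by rewrite -(blk_eq Hxr); apply: ltnW.
    rewrite Fr //; case: (EdP x _) => // _; by rewrite -(blk_eq Er0).
  have e2 := L2 (sax_axis HL) (fun z zC => sax_int HL zC).
  have e3 := L2 Hax allint.
  have := Hopt _ (sax_axis HL); lia.
move=> H; split => //.
have Hb y : y \in C -> is_interval ax (blk y) /\ scoring_rule cost (blk y) (restrict P (blk y)) [seq z <- ax | z \in blk y].
  by move=> yC; apply: H; exact: is_block_blk.
move=> ax' Hax'; rewrite (L2 Hax (fun y yC => (Hb y yC).1)).
have := L1 Hax'.
have : TB ax <= TB ax'.
  rewrite /TB big_seq [X in _ <= X]big_seq; apply: leq_sum => r rR; have rC := R_sub rR.
  exact: (Hb r rC).2.2 _ (filter_axis Hax' rC).
lia.
Qed.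
End Main.

Lemma E_closed (P : profile) (S : seq nat) x y :
  all (fun A => all (fun z => z \in S) A) P -> x \in S -> coapp_equiv P x y -> y \in S.
Proof.
move=> /allP HS' xS H.
have HS : forall A, A \in P -> {subset A <= S} by move=> A AP; apply/allP; exact: HS'.
 elim: H xS => // a b c _ IH /hasP[A AP /andP[_ cA]] _.
exact: HS AP _ cA.
Qed.

Lemma profile_of C P : all (fun A => (A != [::]) && all (fun x => x \in C) A) P -> is_profile C P.
Proof.
move/allP=> H A AP; case/andP: (H A AP) => H1 /allP H2; split => // x xA; exact: H2.
Qed.

Lemma tc_sumn cost P ax : total_cost cost P ax = sumn [seq cost A ax | A <- P].
Proof. by rewrite /total_cost sumnE big_map. Qed.

Lemma opt_of cost C P ax : perm_eq ax C ->
  all (fun ax' => sumn [seq cost A ax | A <- P] <= sumn [seq cost A ax' | A <- P]) (permutations C) ->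
  scoring_rule cost C P ax.
Proof.
move=> H /allP K; split => // ax' H'; rewrite !tc_sumn; apply: K; by rewrite mem_permutations.
Qed.

Theorem mainTheorem19 :
  partition_consistent BC /\ partition_consistent MS /\ partition_consistent FT /\
  (exists (C : seq nat) (P : profile) (ax : seq nat),
     uniq C /\ is_profile C P /\ is_axis C ax /\ ~ pc_equiv VD C P ax) /\
  (exists (C : seq nat) (P : profile) (ax : seq nat),
     uniq C /\ is_profile C P /\ is_axis C ax /\ ~ pc_equiv MF C P ax).
Proof.
split; first by move=> C P ax uC HP Hax; exact: (pc_main BC_prop uC HP Hax).
split; first by move=> C P ax uC HP Hax; exact: (pc_main MS_prop uC HP Hax).
split; first by move=> C P ax uC HP Hax; exact: (pc_main FT_prop uC HP Hax).
split.
  exists [:: 0; 1; 2; 3; 4], [:: [:: 0; 2]; [:: 0; 1]; [:: 1; 3; 2]; [:: 1; 2; 0]], [:: 1; 0; 2; 4; 3].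
  split => //; split; first by apply: profile_of.
  split => //; case=> H _.
  have HL : VD [:: 0; 1; 2; 3; 4] [:: [:: 0; 2]; [:: 0; 1]; [:: 1; 3; 2]; [:: 1; 2; 0]] [:: 1; 0; 2; 4; 3].
    by apply: (@opt_of cost_VD); vm_compute.
  have HS : is_block [:: 0; 1; 2; 3; 4] [:: [:: 0; 2]; [:: 0; 1]; [:: 1; 3; 2]; [:: 1; 2; 0]] [:: 0; 1; 2; 3].
    split => //; exists 0 => // y; split.
      rewrite !inE => /or4P[] /eqP -> ; split => //.
      - exact: ce_refl.
      - by apply: (@ce_step _ 0 0 1) => //; exact: ce_refl.
      - by apply: (@ce_step _ 0 0 2) => //; exact: ce_refl.
      - by apply: (@ce_step _ 0 1 3) => //; apply: (@ce_step _ 0 0 1) => //; exact: ce_refl.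
    by case=> _; apply: E_closed.
  by have [] := H HL _ HS.
exists [:: 0; 1; 2; 3; 4], [:: [:: 1; 2]; [:: 3; 2]; [:: 0; 3; 2]; [:: 2; 0]], [:: 0; 2; 3; 4; 1].
split => //; split; first by apply: profile_of.
split => //; case=> H _.
have HL : MF [:: 0; 1; 2; 3; 4] [:: [:: 1; 2]; [:: 3; 2]; [:: 0; 3; 2]; [:: 2; 0]] [:: 0; 2; 3; 4; 1].
  by apply: (@opt_of cost_MF); vm_compute.
have HS : is_block [:: 0; 1; 2; 3; 4] [:: [:: 1; 2]; [:: 3; 2]; [:: 0; 3; 2]; [:: 2; 0]] [:: 0; 1; 2; 3].
  split => //; exists 0 => // y; split.
    rewrite !inE => /or4P[] /eqP -> ; split => //.
    - exact: ce_refl.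
    - by apply: (@ce_step _ 0 2 1) => //; apply: (@ce_step _ 0 0 2) => //; exact: ce_refl.
    - by apply: (@ce_step _ 0 0 2) => //; exact: ce_refl.
    - by apply: (@ce_step _ 0 0 3) => //; exact: ce_refl.
  by case=> _; apply: E_closed.
by have [] := H HL _ HS.
Qed.
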